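(* For every command $C$ and every expectation $f$, \[ \mathsf{ect}[C](f) \;\le\; \mathsf{ect}[C](\mathbf{0}) + \mathsf{evt}[C](f) \] pointwise.
   Context: Let $\mathrm{Var}$ be a finite set of integer-valued variables and $\Sigma = \mathrm{Var}\to\mathbb{Z}$ the set of stores; $\sigma[x\mapsto i]$ is the store updated at $x$. Boolean expressions $\varphi$ are evaluated on stores ($\sigma\models\varphi$). A distribution expression $d$ assigns to each store $\sigma$ a probability distribution $d(\sigma)$ on $\mathbb{Z}$. Commands: $C,D ::= \mathtt{skip} \mid \mathtt{tick}(r) \mid \mathtt{halt} \mid x :\approx d \mid \mathtt{if}_{[\psi]}(\varphi)\{C\}\{D\} \mid \mathtt{while}_{[\psi]}(\varphi)\{C\} \mid C \,\square\, D \mid C \oplus_p D \mid C;D$, with $r$ a nonnegative rational, $p\in[0,1]$. Expectations are functions $f:\Sigma\to[0,\infty]$, ordered pointwise, with pointwise operations, $\mathbf{r}$ the constant $r$ (so $\mathbf{0}$ is the zero function), $[\varphi](\sigma)\in\{0,1\}$ the indicator, $[c]=1$ if $c=\mathit{true}$ and $0$ otherwise, $0\cdot\infty=0$. Transformer $\mathsf{et}_c$ for $c\in\{\mathit{true},\mathit{false}\}$: $\mathsf{et}_c[\mathtt{skip}](f)=f$; $\mathsf{et}_c[\mathtt{tick}(r)](f)=[c]\cdot\mathbf{r}+f$; $\mathsf{et}_c[\mathtt{halt}](f)=\mathbf{0}$; $\mathsf{et}_c[x:\approx d](f)=\lambda\sigma.\sum_{i} d(\sigma)(i)\, f(\sigma[x\mapsto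 i])$; $\mathsf{et}_c[\mathtt{if}_{[\psi]}(\varphi)\{C\}\{D\}](f)=[\psi\wedge\varphi]\cdot\mathsf{et}_c[C](f)+[\psi\wedge\neg\varphi]\cdot\mathsf{et}_c[D](f)$; $\mathsf{et}_c[\mathtt{while}_{[\psi]}(\varphi)\{C\}](f)=\mathrm{lfp}\,F.\ [\psi\wedge\varphi]\cdot\mathsf{et}_c[C](F)+[\psi\wedge\neg\varphi]\cdot f$ (least fixed point, pointwise order); $\mathsf{et}_c[C\,\square\,D](f)=\max(\mathsf{et}_c[C](f),\mathsf{et}_c[D](f))$; $\mathsf{et}_c[C\oplus_p D](f)=\mathbf{p}\cdot\mathsf{et}_c[C](f)+\mathbf{(1-p)}\cdot\mathsf{et}_c[D](f)$; $\mathsf{et}_c[C;D](f)=\mathsf{et}_c[C](\mathsf{et}_c[D](f))$. The expected cost transformer is $\mathsf{ect}[C]=\mathsf{et}_{\mathit{true}}[C]$ and the expected value transformer is $\mathsf{evt}[C]=\mathsf{et}_{\mathit{false}}[C]$. *)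

(* Defs.v *)
From HB Require Import structures.
From mathcomp Require Import all_boot all_order all_algebra.
From mathcomp Require Import all_classical all_reals.
From mathcomp Require Import ereal esum.
Set Implicit Arguments. Unset Strict Implicit. Unset Printing Implicit Defensive.
Import Order.TTheory GRing.Theory Num.Theory.
Local Open Scope classical_set_scope.
Local Open Scope ring_scope.

Section Lang.
Variable R : realType.
Variable Var : finType.

Definition store := Var -> int.
Definition upd (s : store) (x : Var) (i : int) : store :=
  fun y => if y == x then i else s y.

Definition bexp := store -> bool.

Record distr := Distr {
  pmf :> int -> R;
  pmf_ge0 : forall i, 0 <= pmf i;
  pmf_sum1 : (\esum_(i in [set: int]) (pmf i)%:E = 1)%E }.

Definition dexp := store -> distr.

Inductive cmd :=
| Skip
| Tick (r : rat) of (0 <= r)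
| Halt
| Sample (x : Var) (d : dexp)
| If (psi phi : bexp) (C D : cmd)
| While (psi phi : bexp) (C : cmd)
| NDet (C D : cmd)
| Prob (C D : cmd) (p : R) of (0 <= p <= 1)
| Seq (C D : cmd).

(* expectations: functions store -> [0, +oo]; represented in \bar R,
   nonnegativity is imposed where needed *)
Definition expt := store -> \bar R.

(* least fixed point in the complete lattice of nonnegative expectations
   (pointwise order): infimum of all pre-fixed points (Knaster-Tarski) *)
Definition lfp (Phi : expt -> expt) : expt :=
  fun s => ereal_inf [set G s | G in
    [set G : expt | (forall t, 0 <= G t)%E /\ (forall t, Phi G t <= G t)%E]].

Fixpoint et (c : bool) (C : cmd) (f : expt) : expt :=
  match C with
  | Skip => f
  | Tick r _ => fun s => ((if c then (ratr r : R) else 0)%:E + f s)%E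
  | Halt => fun _ => 0%E
  | Sample x d => fun s => \esum_(i in [set: int]) ((d s i)%:E * f (upd s x i))%E
  | If psi phi C1 D1 => fun s =>
      if psi s && phi s then et c C1 f s
      else if psi s && ~~ phi s then et c D1 f s else 0%E
  | While psi phi C1 =>
      lfp (fun F s => if psi s && phi s then et c C1 F s
                      else if psi s && ~~ phi s then f s else 0%E)
  | NDet C1 D1 => fun s => maxe (et c C1 f s) (et c D1 f s)
  | Prob C1 D1 p _ => fun s => (p%:E * et c C1 f s + (1 - p)%:E * et c D1 f s)%E
  | Seq C1 D1 => et c C1 (et c D1 f)
  end.

Definition ect := et true.
Definition evt := et false.
End Lang.

(* Main.v *)
Require Import Defs.
From mathcomp Require Import all_boot all_order all_algebra.
From mathcomp Require Import all_classical all_reals.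
From mathcomp Require Import ereal esum.
Local Open Scope ring_scope.
Local Open Scope ereal_scope.
Import Order.TTheory GRing.Theory Num.Theory.

Section Aux.
Variables (R : realType) (Var : finType).
Local Notation expt := (expt R Var).

Lemma lfp_ge0 (Phi : expt -> expt) s : 0 <= lfp Phi s.
Proof. apply/ereal_infP => y [G [G0 _] <-]; exact: G0. Qed.

Lemma lfp_lb (Phi : expt -> expt) (G : expt) :
  (forall t, 0 <= G t) -> (forall t, Phi G t <= G t) -> forall s, lfp Phi s <= G s.
Proof. move=> G0 HG s; apply: ge_ereal_inf; exists (G s) => //; by exists G. Qed.

Lemma lfp_pre (Phi : expt -> expt) :
  (forall F G, (forall t, 0 <= F t) -> (forall t, F t <= G t) -> forall s, Phi F s <= Phi G s) ->
  forall s, Phi (lfp Phi) s <= lfp Phi s.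
Proof.
move=> mono s; apply/ereal_infP => y [G [G0 HG] <-].
apply: le_trans (HG s); apply: mono; first exact: lfp_ge0.
exact: lfp_lb.
Qed.

Lemma maxl (x y : \bar R) : x <= maxe x y. Proof. by rewrite le_max lexx. Qed.
Lemma maxr (x y : \bar R) : y <= maxe x y. Proof. by rewrite le_max lexx orbT. Qed.

Lemma r01 (p : R) : (0 <= p <= 1)%R -> 0 <= p%:E /\ 0 <= (1 - p)%:E.
Proof. move=> /andP[h0 h1]; rewrite !lee_fin subr_ge0; by split. Qed.

Lemma et_ge0 c (C : cmd R Var) : forall f : expt, (forall s, 0 <= f s) -> forall s, 0 <= et c C f s.
Proof.
elim: C => /=.
- by [].
- move=> r r0 f f0 s; apply: adde_ge0 => //; case: c => //; rewrite lee_fin ler0q //.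
- by [].
- move=> x d f f0 s; apply: esum_ge0 => i _; apply: mule_ge0 => //; rewrite lee_fin; exact: pmf_ge0.
- move=> psi phi C1 IH1 D1 IH2 f f0 s; case: ifP => _; first exact: IH1.
  by case: ifP => _ //; exact: IH2.
- move=> psi phi C1 IH f f0 s; exact: lfp_ge0.
- move=> C1 IH1 D1 IH2 f f0 s; apply: le_trans (IH1 f f0 s) _; exact: maxl.
- move=> C1 IH1 D1 IH2 p hp f f0 s; have [p0 p1] := r01 p hp.
  by apply: adde_ge0; apply: mule_ge0 => //; [exact: IH1|exact: IH2].
- move=> C1 IH1 D1 IH2 f f0 s; apply: IH1; exact: IH2.
Qed.

Lemma et_mono c (C : cmd R Var) : forall f g : expt, (forall s, 0 <= f s) ->
  (forall s, f s <= g s) -> forall s, et c C f s <= et c C g s.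
Proof.
elim: C => /=.
- by [].
- move=> r r0 f g f0 fg s; exact: leeD2l.
- by [].
- move=> x d f g f0 fg s; apply: le_esum => i _; apply: lee_wpmul2l => //.
  rewrite lee_fin; exact: pmf_ge0.
- move=> psi phi C1 IH1 D1 IH2 f g f0 fg s; case: ifP => _; first exact: IH1.
  by case: ifP => _ //; exact: IH2.
- move=> psi phi C1 IH f g f0 fg s.
  apply: ereal_inf_le_tmp => y [G [G0 HG] <-]; exists G => //; split => // t.
  apply: le_trans (HG t); case: ifP => // _; case: ifP => // _.
- move=> C1 IH1 D1 IH2 f g f0 fg s; rewrite ge_max; apply/andP; split.
  + apply: le_trans (IH1 f g f0 fg s) _; exact: maxl.
  + apply: le_trans (IH2 f g f0 fg s) _; exact: maxr.
- move=> C1 IH1 D1 IH2 p hp f g f0 fg s; have [p0 p1] := r01 p hp.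
  by apply: leeD; apply: lee_wpmul2l => //; [exact: IH1|exact: IH2].
- move=> C1 IH1 D1 IH2 f g f0 fg s; apply: IH1; [exact: et_ge0|exact: IH2].
Qed.

Lemma key (C : cmd R Var) : forall g f : expt, (forall s, 0 <= g s) -> (forall s, 0 <= f s) ->
  forall s, ect C (fun t => g t + f t) s <= ect C g s + evt C f s.
Proof.
rewrite /ect /evt.
elim: C => /=.
- by [].
- move=> r r0 g f g0 f0 s; by rewrite add0e addeA.
- by move=> g f _ _ s; rewrite adde0.
- move=> x d g f g0 f0 s.
  have dge0 i : 0 <= (d s i)%:E by rewrite lee_fin; exact: pmf_ge0.
  rewrite -esumD; last 2 first.
  + move=> i _; exact: mule_ge0.
  + move=> i _; exact: mule_ge0.
  by apply: le_esum => i _; rewrite ge0_muleDr.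
- move=> psi phi C1 IH1 D1 IH2 g f g0 f0 s; case: ifP => _; first exact: IH1.
  case: ifP => _; [exact: IH2|by rewrite adde0].
- move=> psi phi C1 IH g f g0 f0 s.
  set L := lfp _. set A := lfp _. set B := lfp _.
  have A0 t : 0 <= A t by exact: lfp_ge0.
  have B0 t : 0 <= B t by exact: lfp_ge0.
  have Apre := @lfp_pre (fun F s => if psi s && phi s then et true C1 F s
                      else if psi s && ~~ phi s then g s else 0).
  have Bpre := @lfp_pre (fun F s => if psi s && phi s then et false C1 F s
                      else if psi s && ~~ phi s then f s else 0).
  have /= := Apre _; rewrite -/A => {}Apre.
  have /= := Bpre _; rewrite -/B => {}Bpre.
  have mono c F G : (forall t, 0 <= F t) -> (forall t, F t <= G t) -> forall s,
     (if psi s && phi s then et c C1 F s else if psi s && ~~ phi s then g s else 0)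
     <= (if psi s && phi s then et c C1 G s else if psi s && ~~ phi s then g s else 0).
    by move=> F0 FG t; case: ifP => _ //; exact: et_mono.
  have monof c F G : (forall t, 0 <= F t) -> (forall t, F t <= G t) -> forall s,
     (if psi s && phi s then et c C1 F s else if psi s && ~~ phi s then f s else 0)
     <= (if psi s && phi s then et c C1 G s else if psi s && ~~ phi s then f s else 0).
    by move=> F0 FG t; case: ifP => _ //; exact: et_mono.
  have {}Apre := Apre (mono true).
  have {}Bpre := Bpre (monof false).
  rewrite /L.   apply: (@lfp_lb _ (fun t => (A t + B t)%E)) => [t|t]; first exact: adde_ge0.
  have := Apre t; have := Bpre t.
  case: ifP => _.
  + move=> hB hA; apply: le_trans (IH A B A0 B0 t) _; exact: leeD.
  + case: ifP => _ //; [move=> hB hA; exact: leeD|move=> _ _; exact: adde_ge0].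
- move=> C1 IH1 D1 IH2 g f g0 f0 s; rewrite ge_max; apply/andP; split.
  + apply: le_trans (IH1 g f g0 f0 s) _; apply: leeD; [exact: maxl|exact: maxl].
  + apply: le_trans (IH2 g f g0 f0 s) _; apply: leeD; [exact: maxr|exact: maxr].
- move=> C1 IH1 D1 IH2 p hp g f g0 f0 s; have [p0 p1] := r01 p hp.
  apply: (@le_trans _ _ (p%:E * (et true C1 g s + et false C1 f s) + (1-p)%:E * (et true D1 g s + et false D1 f s))).
    apply: leeD.
      apply: lee_wpmul2l => //; exact: IH1.
    apply: lee_wpmul2l => //; exact: IH2.
  have a1 := @et_ge0 true C1 g g0 s. have b1 := @et_ge0 false C1 f f0 s.
  have a2 := @et_ge0 true D1 g g0 s. have b2 := @et_ge0 false D1 f f0 s.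
  rewrite (ge0_muleDr _ a1 b1) (ge0_muleDr _ a2 b2).
  move: (p%:E * et true C1 g s) (p%:E * et false C1 f s) ((1 - p)%:E * et true D1 g s) ((1 - p)%:E * et false D1 f s) => x y z w.
  by rewrite (addeACA x y z w).
- move=> C1 IH1 D1 IH2 g f g0 f0 s.
  apply: le_trans (IH1 _ _ _ _ s); last 2 first.
  + exact: et_ge0.
  + exact: et_ge0.
  apply: et_mono; last exact: IH2.
  move=> t; apply: et_ge0 => u; exact: adde_ge0.
Qed.

End Aux.

Theorem mainTheorem7 (R : realType) (Var : finType) (C : cmd R Var)
  (f : expt R Var) (f_ge0 : forall s, 0 <= f s) :
  forall s : store Var, ect C f s <= ect C (fun _ => 0) s + evt C f s.
Proof.
move=> s; have := @key R Var C (fun _ => 0) f (fun _ => lexx 0) f_ge0 s.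
have -> : (fun t => (0 : \bar R) + f t) = f by apply: funext => t; rewrite add0e.
by [].
Qed.
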